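(* Let $v=(v_l,v_h)$ be a valuation profile and let $\sigma=(\sigma_l,\sigma_h)$ be a Nash equilibrium of the winner-bid auction game $WB(v)$. Let $\{\sigma^\lambda\}_{\lambda\in\mathbb{N}}$ be a sequence of mixed-strategy profiles, each weakly payoff-monotone for $WB(v)$, such that $\sigma^\lambda\to\sigma$ as $\lambda\to\infty$. Let $$t(v)\equiv\max\{2c_h/3-c_l,\ ES(v)/3\}+1.$$ Then there exists $\Lambda\in\mathbb{N}$ such that for each $\lambda\geq\Lambda$: (1) if $v_l\geq v_h/3$, then $E_{\sigma^\lambda_l}(b)<c_l+1$; (2) $c_l-1<E_{\sigma^\lambda_h}(b)<c_l+t(v)$; (3) $\pi_l(\sigma^\lambda)<c_l+t(v)$ and $\pi_h(\sigma^\lambda)>c_h+(ES(v)-t(v))$; (4) if $\pi_l(\sigma)>c_l$, then $E_{\sigma^\lambda_l}(b)<E_{\sigma^\lambda_h}(b)$.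
   Context: Two agents $l,h$ jointly own an indivisible good. Agent $i\in\{l,h\}$ has valuation $v_i$; valuations are even nonnegative integers bounded by a maximum valuation $\overline{v}$, with $v_l<v_h$; write $v=(v_l,v_h)$. Agent $i$'s utility from receiving the object and paying $p$ to the other agent is $v_i-p$; from not receiving the object and receiving transfer $p$ it is $p$; agents are expected-utility maximizers. Net valuations are $c_i\equiv v_i/2$ (integers), and the equity surplus is $ES(v)\equiv c_h-c_l$. The bid set is $\mathcal{B}=\{0,1,\dots,\overline{p}\}$ with $\overline{p}$ an integer, $\overline{p}\geq\overline{v}/2$. For $\alpha\in[0,1]$, the $\alpha$-auction (with tie-breaker favoring $h$) is: each agent simultaneously chooses a bid in $\mathcal{B}$; the agent with the strictly higher bid receives the object, and in case of a tie agent $h$ receives the object; the agent receiving the object pays $\alpha\cdot(\text{winner's bid})+(1-\alpha)\cdot(\text{loser's bid})$ to the other agent. The winner-bid auction $WB$ is $\alpha=1$; $WB(v)$ denotes the induced complete-information game with valuations $v$. A mixed strategy of agent $i$ is $\sigma_i\in\Delta(\mathcal{B})$; $E_{\sigma_i}(b)=\sum_{b\in\mathcal{B}}\sigma_i(b)\,b$ is agent $i$'s expected bid; $\pi_i(\sigma)$ is agent $i$'s expected utility under the profile $\sigma=(\sigma_l,\sigma_h)$. A Nash equilibrium is a profile in which each agent's strategy puts positive probability only on bids maximizing her expected utility given the other agent's strategy. A profile $\sigma$ is weakly payoff-monotone for the game if for each agent $i$ and each pair of bids $b,d\in\mathcal{B}$, $\sigma_i(b)>\sigma_i(d)$ implies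 that the expected utility of bid $b$ for agent $i$ against $\sigma_{-i}$ is strictly greater than that of bid $d$. Convergence $\sigma^\lambda\to\sigma$ is pointwise convergence of the probability vectors. *)

(* Defs.v *)
From Stdlib Require Import Reals Lra Lia Arith.
Open Scope R_scope.

(* Bids are natural numbers b with b <= pbar (bid set B = {0,...,pbar}).
   A mixed strategy is a function nat -> R; only its values on B matter. *)
Definition is_mixed (pbar : nat) (s : nat -> R) : Prop :=
  (forall b : nat, (b <= pbar)%nat -> 0 <= s b) /\ sum_f_R0 s pbar = 1.

(* The winner pays
   alpha * (winner's bid) + (1 - alpha) * (loser's bid) to the other agent. *)
Definition u_l (alpha vl : R) (bl bh : nat) : R :=
  if (bh <? bl)%nat
  then vl - (alpha * INR bl + (1 - alpha) * INR bh)
  else alpha * INR bh + (1 - alpha) * INR bl.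

Definition u_h (alpha vh : R) (bl bh : nat) : R :=
  if (bh <? bl)%nat
  then alpha * INR bl + (1 - alpha) * INR bh
  else vh - (alpha * INR bh + (1 - alpha) * INR bl).

Definition wb_u_l (vl : R) (bl bh : nat) : R := u_l 1 vl bl bh.
Definition wb_u_h (vh : R) (bl bh : nat) : R := u_h 1 vh bl bh.

Definition U_l (pbar : nat) (vl : R) (sh : nat -> R) (b : nat) : R :=
  sum_f_R0 (fun d => sh d * wb_u_l vl b d) pbar.
Definition U_h (pbar : nat) (vh : R) (sl : nat -> R) (b : nat) : R :=
  sum_f_R0 (fun d => sl d * wb_u_h vh d b) pbar.

Definition pi_l (pbar : nat) (vl : R) (sl sh : nat -> R) : R :=
  sum_f_R0 (fun b => sl b * U_l pbar vl sh b) pbar.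
Definition pi_h (pbar : nat) (vh : R) (sl sh : nat -> R) : R :=
  sum_f_R0 (fun b => sh b * U_h pbar vh sl b) pbar.

Definition Ebid (pbar : nat) (s : nat -> R) : R :=
  sum_f_R0 (fun b => s b * INR b) pbar.

Definition is_NE (pbar : nat) (vl vh : R) (sl sh : nat -> R) : Prop :=
  is_mixed pbar sl /\ is_mixed pbar sh /\
  (forall b d : nat, (b <= pbar)%nat -> (d <= pbar)%nat ->
      0 < sl b -> U_l pbar vl sh d <= U_l pbar vl sh b) /\
  (forall b d : nat, (b <= pbar)%nat -> (d <= pbar)%nat ->
      0 < sh b -> U_h pbar vh sl d <= U_h pbar vh sl b).

Definition weakly_payoff_monotone (pbar : nat) (vl vh : R) (sl sh : nat -> R) : Prop :=
  (forall b d : nat, (b <= pbar)%nat -> (d <= pbar)%nat ->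
      sl b > sl d -> U_l pbar vl sh b > U_l pbar vl sh d) /\
  (forall b d : nat, (b <= pbar)%nat -> (d <= pbar)%nat ->
      sh b > sh d -> U_h pbar vh sl b > U_h pbar vh sl d).

Definition netval (v : nat) : R := INR v / 2.
Definition ES (vl vh : nat) : R := netval vh - netval vl.
Definition t_v (vl vh : nat) : R :=
  Rmax (2 * netval vh / 3 - netval vl) (ES vl vh / 3) + 1.

(* Main.v *)
Require Import Defs.
From Stdlib Require Import Reals Arith.
From Stdlib Require Import Lra Lia Classical Bool.
Open Scope R_scope.

Lemma sum_le (f g : nat -> R) n : (forall i, (i <= n)%nat -> f i <= g i) ->
  sum_f_R0 f n <= sum_f_R0 g n.
Proof. apply sum_Rle. Qed.

Lemma sum_ext (f g : nat -> R) n : (forall i, (i <= n)%nat -> f i = g i) ->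
  sum_f_R0 f n = sum_f_R0 g n.
Proof. apply sum_eq. Qed.

Lemma sum_add (f g : nat -> R) n :
  sum_f_R0 (fun i => f i + g i) n = sum_f_R0 f n + sum_f_R0 g n.
Proof. apply sum_plus. Qed.

Lemma sum_sub (f g : nat -> R) n :
  sum_f_R0 (fun i => f i - g i) n = sum_f_R0 f n - sum_f_R0 g n.
Proof. induction n; simpl; [lra|rewrite IHn; lra]. Qed.

Lemma sum_scal (c : R) (f : nat -> R) n :
  sum_f_R0 (fun i => c * f i) n = c * sum_f_R0 f n.
Proof. induction n; simpl; [lra|rewrite IHn; lra]. Qed.

Lemma sum_nonneg (f : nat -> R) n : (forall i, (i <= n)%nat -> 0 <= f i) ->
  0 <= sum_f_R0 f n.
Proof. induction n; intros H; simpl; [apply H; lia|].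
  assert (0 <= sum_f_R0 f n) by (apply IHn; intros; apply H; lia).
  assert (0 <= f (S n)) by (apply H; lia). lra. Qed.

Lemma sum_ge_term (f : nat -> R) n k : (forall i, (i <= n)%nat -> 0 <= f i) ->
  (k <= n)%nat -> f k <= sum_f_R0 f n.
Proof. induction n; intros H Hk; simpl.
  - replace k with 0%nat by lia; lra.
  - destruct (Nat.eq_dec k (S n)) as [->|Hne].
    + assert (0 <= sum_f_R0 f n) by (apply sum_nonneg; intros; apply H; lia). lra.
    + assert (f k <= sum_f_R0 f n) by (apply IHn; [intros; apply H; lia|lia]).
      assert (0 <= f (S n)) by (apply H; lia). lra. Qed.

Lemma sum_single (f : nat -> R) n k : (k <= n)%nat ->
  (forall i, (i <= n)%nat -> i <> k -> f i = 0) -> sum_f_R0 f n = f k.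
Proof. induction n; intros Hk H; simpl.
  - replace k with 0%nat by lia; reflexivity.
  - destruct (Nat.eq_dec k (S n)) as [->|Hne].
    + assert (sum_f_R0 f n = 0).
      { clear IHn. assert (forall m, (m <= n)%nat -> sum_f_R0 f m = 0).
        { induction m; intros; simpl. apply H; lia. rewrite IHm by lia. rewrite (H (S m)) by lia. lra. }
        apply H0; lia. }
      lra.
    + rewrite IHn by (try lia; intros; apply H; lia). rewrite (H (S n)) by lia. lra. Qed.

Lemma sum_delta n k c : (k <= n)%nat ->
  sum_f_R0 (fun i => if Nat.eqb i k then c else 0) n = c.
Proof. intros Hk. rewrite (sum_single _ n k Hk).
  - rewrite Nat.eqb_refl; reflexivity.
  - intros i _ Hi. apply Nat.eqb_neq in Hi. rewrite Hi. reflexivity. Qed.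

Lemma sum_tele (G : nat -> R) a b n : (a <= b)%nat -> (b <= S n)%nat ->
  sum_f_R0 (fun d => if andb (Nat.leb a d) (Nat.ltb d b) then G (S d) - G d else 0) n
  = G b - G a.
Proof. intros Hab Hbn.
  assert (Hg : forall m, sum_f_R0 (fun d => if andb (Nat.leb a d) (Nat.ltb d b) then G (S d) - G d else 0) m
     = G (Nat.max a (Nat.min (S m) b)) - G a).
  { induction m; cbn [sum_f_R0].
    - destruct (Nat.leb_spec a 0); destruct (Nat.ltb_spec 0 b); cbn [andb].
      + replace (Nat.max a (Nat.min 1 b)) with 1%nat by lia. replace a with 0%nat by lia. lra.
      + replace (Nat.max a (Nat.min 1 b)) with a by lia. lra.
      + replace (Nat.max a (Nat.min 1 b)) with a by lia. lra.
      + replace (Nat.max a (Nat.min 1 b)) with a by lia. lra.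
    - rewrite IHm. destruct (Nat.leb_spec a (S m)); destruct (Nat.ltb_spec (S m) b); cbn [andb].
      + replace (Nat.max a (Nat.min (S m) b)) with (S m) by lia.
        replace (Nat.max a (Nat.min (S (S m)) b)) with (S (S m)) by lia. lra.
      + replace (Nat.max a (Nat.min (S (S m)) b)) with (Nat.max a (Nat.min (S m) b)) by lia. lra.
      + replace (Nat.max a (Nat.min (S (S m)) b)) with (Nat.max a (Nat.min (S m) b)) by lia. lra.
      + replace (Nat.max a (Nat.min (S (S m)) b)) with (Nat.max a (Nat.min (S m) b)) by lia. lra. }
  rewrite Hg. replace (Nat.max a (Nat.min (S n) b)) with b by lia. reflexivity. Qed.

Lemma sum_trunc (f : nat -> R) n m : (n <= m)%nat ->
  (forall i, (n < i <= m)%nat -> f i = 0) -> sum_f_R0 f m = sum_f_R0 f n.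
Proof. induction m; intros H H0.
  - replace n with 0%nat by lia; reflexivity.
  - destruct (Nat.eq_dec n (S m)) as [->|Hne]; [reflexivity|].
    simpl. rewrite IHm by (try lia; intros; apply H0; lia). rewrite (H0 (S m)) by lia. lra. Qed.

Lemma sum_refl (f : nat -> R) n : sum_f_R0 f n = sum_f_R0 (fun i => f (n - i)%nat) n.
Proof. revert f; induction n; intros f. reflexivity.
  rewrite (decomp_sum f (S n)) by lia. rewrite tech5. simpl pred.
  rewrite (IHn (fun i => f (S i))).
  replace (S n - S n)%nat with 0%nat by lia.
  assert (sum_f_R0 (fun i => f (S (n - i))) n = sum_f_R0 (fun i => f (S n - i)%nat) n).
  { apply sum_ext. intros. f_equal. lia. }
  rewrite H. lra. Qed.

Lemma sum_swap (f : nat -> nat -> R) n m :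
  sum_f_R0 (fun i => sum_f_R0 (fun j => f i j) m) n =
  sum_f_R0 (fun j => sum_f_R0 (fun i => f i j) n) m.
Proof. induction n; simpl. reflexivity.
  rewrite IHn. rewrite <- sum_add. reflexivity. Qed.

Definition ev (P : nat -> Prop) := exists N, forall n, (N <= n)%nat -> P n.

Lemma ev_and (P Q : nat -> Prop) : ev P -> ev Q -> ev (fun n => P n /\ Q n).
Proof. intros [N1 H1] [N2 H2]. exists (Nat.max N1 N2). intros n Hn.
  split; [apply H1|apply H2]; lia. Qed.

Lemma ev_mono (P Q : nat -> Prop) : (forall n, P n -> Q n) -> ev P -> ev Q.
Proof. intros H [N HN]. exists N. intros; auto. Qed.

Lemma ev_true : ev (fun _ => True).
Proof. exists 0%nat; auto. Qed.

Lemma ev_fin (P : nat -> nat -> Prop) n :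
  (forall i, (i <= n)%nat -> ev (P i)) -> ev (fun k => forall i, (i <= n)%nat -> P i k).
Proof. induction n; intros H.
  - destruct (H 0%nat (le_n 0)) as [N HN]. exists N. intros k Hk i Hi.
    replace i with 0%nat by lia. auto.
  - destruct IHn as [N1 H1]. { intros; apply H; lia. }
    destruct (H (S n) (le_n _)) as [N2 H2]. exists (Nat.max N1 N2). intros k Hk i Hi.
    destruct (Nat.eq_dec i (S n)) as [->|]. apply H2; lia. apply H1; lia. Qed.

Lemma ev_lt (a b : nat -> R) la lb : Un_cv a la -> Un_cv b lb -> la < lb ->
  ev (fun n => a n < b n).
Proof. intros Ha Hb Hl.
  destruct (Ha ((lb - la)/2)) as [N1 H1]; [lra|].
  destruct (Hb ((lb - la)/2)) as [N2 H2]; [lra|].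
  exists (Nat.max N1 N2). intros n Hn.
  specialize (H1 n ltac:(lia)). specialize (H2 n ltac:(lia)).
  unfold R_dist in *. apply Rabs_def2 in H1. apply Rabs_def2 in H2. lra. Qed.

Lemma cv_const c : Un_cv (fun _ => c) c.
Proof. intros e He. exists 0%nat. intros. unfold R_dist. rewrite Rminus_diag, Rabs_R0. lra. Qed.

Lemma lim_le (a b : nat -> R) la lb : Un_cv a la -> Un_cv b lb ->
  (forall n, a n <= b n) -> la <= lb.
Proof. intros Ha Hb H. destruct (Rle_or_lt la lb) as [|Hlt]; [auto|].
  destruct (ev_lt b a lb la Hb Ha Hlt) as [N HN]. specialize (HN N (le_n _)).
  specialize (H N). lra. Qed.

Lemma cv_sum (f : nat -> nat -> R) (g : nat -> R) n :
  (forall i, (i <= n)%nat -> Un_cv (fun k => f k i) (g i)) ->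
  Un_cv (fun k => sum_f_R0 (f k) n) (sum_f_R0 g n).
Proof. induction n; intros H; simpl.
  - apply H; lia.
  - apply CV_plus. apply IHn; intros; apply H; lia. apply H; lia. Qed.

Lemma max_exists (Q : nat -> Prop) n : (exists b, (b <= n)%nat /\ Q b) ->
  exists b, (b <= n)%nat /\ Q b /\ forall d, (b < d <= n)%nat -> ~ Q d.
Proof. induction n; intros [b [Hb Qb]].
  - exists b. repeat split; auto. intros; lia.
  - destruct (classic (Q (S n))) as [HQ|HQ].
    + exists (S n). repeat split; auto. intros; lia.
    + destruct IHn as [c [Hc [Qc Hmax]]].
      { exists b. split; auto. destruct (Nat.eq_dec b (S n)); [subst; contradiction|lia]. }
      exists c. repeat split; auto. intros d Hd. destruct (Nat.eq_dec d (S n)) as [->|]; auto.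
      apply Hmax; lia. Qed.

Lemma min_exists (Q : nat -> Prop) n : (exists b, (b <= n)%nat /\ Q b) ->
  exists b, (b <= n)%nat /\ Q b /\ forall d, (d < b)%nat -> ~ Q d.
Proof. intros [b [Hb Qb]]. revert n Hb. induction b using (well_founded_induction lt_wf).
  intros n Hb. destruct (classic (exists d, (d < b)%nat /\ Q d)) as [[d [Hd Qd]]|Hno].
  - destruct (H d Hd Qd n ltac:(lia)) as [c Hc]. exists c. exact Hc.
  - exists b. repeat split; auto. intros d Hd Qd. apply Hno; eauto. Qed.

Lemma ul_eq v bl bh : wb_u_l v bl bh = if Nat.ltb bh bl then v - INR bl else INR bh.
Proof. unfold wb_u_l, u_l. destruct (Nat.ltb bh bl); ring. Qed.
Lemma uh_eq v bl bh : wb_u_h v bl bh = if Nat.ltb bh bl then INR bl else v - INR bh.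
Proof. unfold wb_u_h, u_h. destruct (Nat.ltb bh bl); ring. Qed.

Lemma wavg_ge (w f : nat -> R) n X : (forall i, (i<=n)%nat -> 0 <= w i) -> sum_f_R0 w n = 1 ->
  (forall i, (i<=n)%nat -> 0 < w i -> X <= f i) -> X <= sum_f_R0 (fun i => w i * f i) n.
Proof. intros H0 H1 H. apply Rle_trans with (sum_f_R0 (fun i => X * w i) n).
  - rewrite sum_scal, H1. lra.
  - apply sum_le. intros i Hi. destruct (H0 i Hi) as [Hp|He].
    + specialize (H i Hi Hp). nra.
    + rewrite <- He. lra. Qed.

Lemma wavg_le (w f : nat -> R) n X : (forall i, (i<=n)%nat -> 0 <= w i) -> sum_f_R0 w n = 1 ->
  (forall i, (i<=n)%nat -> 0 < w i -> f i <= X) -> sum_f_R0 (fun i => w i * f i) n <= X.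
Proof. intros H0 H1 H. apply Rle_trans with (sum_f_R0 (fun i => X * w i) n).
  - apply sum_le. intros i Hi. destruct (H0 i Hi) as [Hp|He].
    + specialize (H i Hi Hp). nra.
    + rewrite <- He. lra.
  - rewrite sum_scal, H1. lra. Qed.

Lemma pos_exists (w : nat -> R) n : (forall i, (i<=n)%nat -> 0 <= w i) -> sum_f_R0 w n = 1 ->
  exists b, (b <= n)%nat /\ 0 < w b.
Proof. intros H0 H1. apply NNPP. intros Hn.
  assert (sum_f_R0 w n = 0).
  { rewrite (sum_ext w (fun _ => 0)). clear. induction n; simpl; lra.
    intros i Hi. destruct (H0 i Hi); auto. exfalso; apply Hn; eauto. }
  lra. Qed.

Lemma U_l_dom P v (t : nat -> R) b d : (forall i, (i<=P)%nat -> 0 <= t i) ->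
  (forall e, (e <= P)%nat -> wb_u_l v b e <= wb_u_l v d e) -> U_l P v t b <= U_l P v t d.
Proof. intros H0 H. unfold U_l. apply sum_le. intros i Hi. specialize (H i Hi). specialize (H0 i Hi). nra. Qed.

Lemma mono_l P vl vh (sl sh : nat -> R) b d : weakly_payoff_monotone P vl vh sl sh ->
  (b <= P)%nat -> (d <= P)%nat -> U_l P vl sh b <= U_l P vl sh d -> sl b <= sl d.
Proof. intros [H _] Hb Hd HU. destruct (Rle_or_lt (sl b) (sl d)); auto.
  specialize (H b d Hb Hd H0). lra. Qed.

Lemma mono_h P vl vh (sl sh : nat -> R) b d : weakly_payoff_monotone P vl vh sl sh ->
  (b <= P)%nat -> (d <= P)%nat -> U_h P vh sl b <= U_h P vh sl d -> sh b <= sh d.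
Proof. intros [_ H] Hb Hd HU. destruct (Rle_or_lt (sh b) (sh d)); auto.
  specialize (H b d Hb Hd H0). lra. Qed.

Lemma netval_2 k : netval (2*k) = INR k.
Proof. unfold netval. rewrite mult_INR. simpl. lra. Qed.

Lemma limit_main (P kl kh : nat) (s t : nat -> R)
 (Hk : (kl < kh)%nat) (HkP : (kh <= P)%nat)
 (HNE : is_NE P (INR (2*kl)) (INR (2*kh)) s t)
 (F1 : forall b, (kl <= b)%nat -> (b < P)%nat -> s (S b) <= s b)
 (Pair : forall d, (kl <= d <= 2*kl)%nat -> (d <= P)%nat -> s d <= s (2*kl - d)%nat)
 (Lam : forall a B, (a < B)%nat -> (B <= P)%nat -> s a < s B ->
     (forall e e', (a <= e)%nat -> (e < e')%nat -> (e' < B)%nat ->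
        U_h P (INR (2*kh)) s e < U_h P (INR (2*kh)) s e') ->
     (a + 3*B <= 2*(2*kl))%nat) :
 (INR (2*kl) >= INR (2*kh)/3 -> Ebid P s <= INR kl) /\
 INR kl - 1 < Ebid P t /\
 Ebid P t < INR kl + (Rmax (2 * INR kh / 3 - INR kl) ((INR kh - INR kl)/3) + 1) /\
 pi_l P (INR (2*kl)) s t < INR kl + (Rmax (2 * INR kh / 3 - INR kl) ((INR kh - INR kl)/3) + 1) /\
 pi_h P (INR (2*kh)) s t > INR kh + ((INR kh - INR kl) - (Rmax (2 * INR kh / 3 - INR kl) ((INR kh - INR kl)/3) + 1)) /\
 (pi_l P (INR (2*kl)) s t > INR kl -> Ebid P s < Ebid P t).
Proof.
  destruct HNE as [[Hs0 Hs1] [[Ht0 Ht1] [HBRl HBRh]]].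
  set (T := Rmax (2 * INR kh / 3 - INR kl) ((INR kh - INR kl)/3) + 1).
  assert (HT1 : (INR kh - INR kl)/3 + 1 <= T) by (unfold T; pose proof (Rmax_r (2 * INR kh / 3 - INR kl) ((INR kh - INR kl)/3)); lra).
  assert (HT2 : 2 * INR kh / 3 - INR kl + 1 <= T) by (unfold T; pose proof (Rmax_l (2 * INR kh / 3 - INR kl) ((INR kh - INR kl)/3)); lra).
  assert (Hklh : INR kl < INR kh) by (apply lt_INR; lia).
  assert (HTpos : 1 < T) by lra.
  assert (Hvl : INR (2*kl) = 2 * INR kl) by (rewrite mult_INR; simpl; lra).
  assert (Hvh : INR (2*kh) = 2 * INR kh) by (rewrite mult_INR; simpl; lra).
  assert (HklP : (kl <= P)%nat) by lia.
  destruct (max_exists (fun b => 0 < s b) P (pos_exists s P Hs0 Hs1)) as [B [HBP [HsB HBmax]]].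
  assert (Hsz : forall d, (B < d <= P)%nat -> s d = 0).
  { intros d Hd. specialize (HBmax d Hd). destruct (Hs0 d ltac:(lia)); [contradiction|auto]. }
  assert (HUh_hi : forall e, (B <= e <= P)%nat -> U_h P (INR (2*kh)) s e = INR (2*kh) - INR e).
  { intros e He. unfold U_h. transitivity (sum_f_R0 (fun d => (INR (2*kh) - INR e) * s d) P).
    - apply sum_ext. intros d Hd. rewrite uh_eq. destruct (Nat.ltb_spec e d).
      + rewrite (Hsz d) by lia. lra.
      + lra.
    - rewrite sum_scal, Hs1. lra. }
  assert (Htz : forall e, (B < e <= P)%nat -> t e = 0).
  { intros e He. destruct (Ht0 e ltac:(lia)) as [Hp|]; auto.
    specialize (HBRh e B ltac:(lia) HBP Hp). rewrite !HUh_hi in HBRh by lia.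
    assert (INR B < INR e) by (apply lt_INR; lia). lra. }
  assert (Hph : INR (2*kh) - INR B <= pi_h P (INR (2*kh)) s t).
  { unfold pi_h. apply wavg_ge; auto. intros e He Hp.
    specialize (HBRh e B He HBP Hp). rewrite HUh_hi in HBRh by lia. lra. }
  assert (Hsum : pi_l P (INR (2*kl)) s t + pi_h P (INR (2*kh)) s t <= INR (2*kh)).
  { unfold pi_l, pi_h, U_l, U_h.
    assert (E1 : sum_f_R0 (fun b => s b * sum_f_R0 (fun d => t d * wb_u_l (INR (2*kl)) b d) P) P
       = sum_f_R0 (fun b => sum_f_R0 (fun d => s b * t d * wb_u_l (INR (2*kl)) b d) P) P).
    { apply sum_ext; intros. rewrite <- sum_scal. apply sum_ext; intros; ring. }
    assert (E2 : sum_f_R0 (fun e => t e * sum_f_R0 (fun d => s d * wb_u_h (INR (2*kh)) d e) P) P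
       = sum_f_R0 (fun b => sum_f_R0 (fun d => s b * t d * wb_u_h (INR (2*kh)) b d) P) P).
    { rewrite (sum_swap (fun b d => s b * t d * wb_u_h (INR (2*kh)) b d)).
      apply sum_ext; intros. rewrite <- sum_scal. apply sum_ext; intros; ring. }
    rewrite E1, E2, <- sum_add.
    apply Rle_trans with (sum_f_R0 (fun b => INR (2*kh) * s b) P).
    2: { rewrite sum_scal, Hs1; lra. }
    apply sum_le; intros b Hb. rewrite <- sum_add.
    apply Rle_trans with (sum_f_R0 (fun d => (INR (2*kh) * s b) * t d) P).
    2: { rewrite sum_scal, Ht1; lra. }
    apply sum_le; intros d Hd. rewrite ul_eq, uh_eq.
    assert (INR (2*kl) <= INR (2*kh)) by (apply le_INR; lia).
    specialize (Hs0 b Hb). specialize (Ht0 d Hd).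
    destruct (Nat.ltb d b).
    - assert (0 <= s b * t d) by nra. nra.
    - nra. }
  assert (HpiB : pi_l P (INR (2*kl)) s t <= INR B) by lra.
  assert (HEsB : Ebid P s <= INR B).
  { unfold Ebid. apply wavg_le; auto. intros b Hb Hp. apply le_INR.
    destruct (le_lt_dec b B); auto. rewrite Hsz in Hp by lia. lra. }
  destruct (le_lt_dec B kl) as [HBkl|HBkl].
  -
    assert (HBklR : INR B <= INR kl) by (apply le_INR; lia).
    assert (HEtB : Ebid P t <= INR B).
    { unfold Ebid. apply wavg_le; auto. intros b Hb Hp. apply le_INR.
      destruct (le_lt_dec b B); auto. rewrite Htz in Hp by lia. lra. }
    assert (HEt : Ebid P t = INR kl).
    { destruct (Rle_lt_or_eq_dec _ _ (Rle_trans _ _ _ HEtB HBklR)) as [Hlt|]; auto.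
      exfalso.
      destruct (min_exists (fun b => 0 < t b) P (pos_exists t P Ht0 Ht1)) as [m [HmP [Htm Hmmin]]].
      assert (Htlow : forall e, (e < m)%nat -> t e = 0).
      { intros e He. destruct (Ht0 e ltac:(lia)); auto. exfalso; eapply Hmmin; eauto. }
      assert (HUlm : forall b, (b <= m)%nat -> U_l P (INR (2*kl)) t b = Ebid P t).
      { intros b Hb. unfold U_l, Ebid. apply sum_ext. intros e He. rewrite ul_eq.
        destruct (Nat.ltb_spec e b). rewrite Htlow by lia. lra. reflexivity. }
      assert (HUlk : U_l P (INR (2*kl)) t kl = INR kl).
      { unfold U_l. transitivity (sum_f_R0 (fun e => INR kl * t e) P).
        - apply sum_ext. intros e He. rewrite ul_eq.
          destruct (Nat.ltb_spec e kl).
          + rewrite Hvl. lra.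
          + destruct (le_lt_dec e B).
            * replace e with kl by lia. lra.
            * rewrite Htz by lia. lra.
        - rewrite sum_scal, Ht1. lra. }
      assert (Hslow : forall b, (b <= m)%nat -> s b = 0).
      { intros b Hb. destruct (Hs0 b ltac:(lia)) as [Hp|]; auto. exfalso.
        specialize (HBRl b kl ltac:(lia) HklP Hp). rewrite HUlk, HUlm in HBRl by lia. lra. }
      assert (HUhm : U_h P (INR (2*kh)) s m = Ebid P s).
      { unfold U_h, Ebid. apply sum_ext. intros d Hd. rewrite uh_eq.
        destruct (Nat.ltb_spec m d). reflexivity. rewrite Hslow by lia. lra. }
      specialize (HBRh m B HmP HBP Htm). rewrite HUhm, HUh_hi in HBRh by lia.
      lra. }
    repeat split.
    + intros _. lra.
    + lra.
    + lra.
    + lra.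
    + lra.
    + intros. lra.
  -
    assert (HBklR : INR kl < INR B) by (apply lt_INR; lia).
    assert (A1 : forall b, (kl <= b <= B)%nat -> s B <= s b).
    { assert (H : forall j, (j <= B - kl)%nat -> s B <= s (B - j)%nat).
      { induction j; intros Hj. replace (B - 0)%nat with B by lia; lra.
        apply Rle_trans with (s (B - j)%nat). apply IHj; lia.
        replace (B - j)%nat with (S (B - S j)) by lia. apply F1; lia. }
      intros b Hb. replace b with (B - (B - b))%nat by lia. apply H; lia. }
    destruct B as [|Bm]; [lia|].
    assert (HBmR : INR (S Bm) = INR Bm + 1) by apply S_INR.
    assert (HsBm : 0 < s Bm) by (pose proof (A1 Bm ltac:(lia)); lra).
    assert (A2 : U_l P (INR (2*kl)) t Bm = U_l P (INR (2*kl)) t (S Bm)).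
    { pose proof (HBRl Bm (S Bm) ltac:(lia) HBP HsBm). pose proof (HBRl (S Bm) Bm HBP ltac:(lia) HsB). lra. }
    assert (Htlow : forall e, (e < S Bm)%nat -> t e = 0).
    { intros e0 He0.
      set (f := fun e => t e * wb_u_l (INR (2*kl)) Bm e - t e * wb_u_l (INR (2*kl)) (S Bm) e).
      assert (Hf : sum_f_R0 f P = 0) by (unfold f; rewrite sum_sub; unfold U_l in A2; lra).
      assert (Hfl : forall e, (e <= P)%nat -> t e * (if Nat.ltb e (S Bm) then 1 else 0) <= f e).
      { intros e He. unfold f. rewrite !ul_eq. specialize (Ht0 e He).
        destruct (Nat.ltb_spec e Bm); destruct (Nat.ltb_spec e (S Bm)); try lia.
        - rewrite HBmR. nra.
        - assert (e = Bm) by lia. subst e. assert (INR (2*kl) + 2 <= 2 * INR (S Bm)).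
          { rewrite Hvl. assert (INR kl + 1 <= INR (S Bm)) by (rewrite <- S_INR; apply le_INR; lia). lra. }
          rewrite HBmR in *. nra.
        - lra. }
      assert (f e0 <= 0).
      { rewrite <- Hf. apply sum_ge_term; [|lia]. intros e He. pose proof (Hfl e He).
        pose proof (Ht0 e He). destruct (Nat.ltb e (S Bm)); nra. }
      pose proof (Hfl e0 ltac:(lia)). destruct (Nat.ltb_spec e0 (S Bm)); [|lia].
      pose proof (Ht0 e0 ltac:(lia)). lra. }
    assert (HtB : t (S Bm) = 1).
    { rewrite <- Ht1. symmetry. apply sum_single; auto. intros i Hi Hne.
      destruct (le_lt_dec i (S Bm)); [apply Htlow; lia|apply Htz; lia]. }
    assert (HEt : Ebid P t = INR (S Bm)).
    { unfold Ebid. rewrite (sum_single _ P (S Bm)); auto. rewrite HtB; lra.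
      intros i Hi Hne. destruct (le_lt_dec i (S Bm)).
      rewrite Htlow by lia; lra. rewrite Htz by lia; lra. }
    assert (HEslt : Ebid P s < INR (S Bm)).
    { set (f := fun b => s b * INR (S Bm) - s b * INR b).
      assert (Hf : sum_f_R0 f P = INR (S Bm) - Ebid P s).
      { unfold f, Ebid. rewrite sum_sub. f_equal.
        rewrite (sum_ext _ (fun b => INR (S Bm) * s b)) by (intros; ring). rewrite sum_scal, Hs1; ring. }
      assert (f kl <= sum_f_R0 f P).
      { apply sum_ge_term; [|lia]. intros b Hb. unfold f. destruct (le_lt_dec b (S Bm)).
        - assert (INR b <= INR (S Bm)) by (apply le_INR; lia). pose proof (Hs0 b Hb). nra.
        - rewrite Hsz by lia. lra. }
      rewrite Hf in H. unfold f in H. pose proof (A1 kl ltac:(lia)).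
      assert (0 < s kl) by lra. assert (0 < INR (S Bm) - INR kl) by lra.
      assert (0 < s kl * (INR (S Bm) - INR kl)) by (apply Rmult_lt_0_compat; lra).
      assert (s kl * INR (S Bm) - s kl * INR kl = s kl * (INR (S Bm) - INR kl)) by ring. lra. }
    assert (A8 : U_h P (INR (2*kh)) s Bm <= U_h P (INR (2*kh)) s (S Bm)).
    { apply HBRh; auto. lia. lra. }
    destruct (min_exists (fun z => forall b', (z <= b' <= S Bm)%nat -> s (S Bm) <= s b') (S Bm))
      as [z [HzB [Qz Hzmin]]].
    { exists kl. split. lia. intros; apply A1; lia. }
    assert (Hzkl : (z <= kl)%nat).
    { destruct (le_lt_dec z kl); auto. exfalso. apply (Hzmin kl); auto. }
    set (j := fun d => s d * wb_u_h (INR (2*kh)) d (S Bm) - s d * wb_u_h (INR (2*kh)) d Bm).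
    assert (Hj : 0 <= sum_f_R0 j P) by (unfold j; rewrite sum_sub; unfold U_h in A8; lra).
    assert (A10 : (3 * S Bm <= 2 * kh + z)%nat).
    { set (G := fun d : nat => s (S Bm) * INR d).
      assert (Hpt : forall d, (d <= P)%nat -> j d <=
         (if Nat.eqb d (S Bm) then s (S Bm) * (INR (2*kh) - 2 * INR (S Bm)) else 0)
         - (if andb (Nat.leb z d) (Nat.ltb d (S Bm)) then G (S d) - G d else 0)).
      { intros d Hd. unfold j, G. rewrite !uh_eq. rewrite S_INR.
        destruct (Nat.eqb_spec d (S Bm)) as [->|Hne].
        - rewrite Nat.ltb_irrefl. destruct (Nat.ltb_spec Bm (S Bm)); [|lia].
          rewrite andb_false_r. rewrite ?S_INR. nra.
        - destruct (Nat.ltb_spec (S Bm) d).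
          + rewrite Hsz by lia. destruct (Nat.ltb_spec d (S Bm)); [lia|].
            rewrite andb_false_r. lra.
          + destruct (Nat.ltb_spec Bm d); [lia|]. destruct (Nat.ltb_spec d (S Bm)); [|lia].
            rewrite andb_true_r. destruct (Nat.leb_spec z d).
            * pose proof (Qz d ltac:(lia)). rewrite S_INR. lra.
            * pose proof (Hs0 d Hd). lra. }
      assert (Hs := sum_le _ _ P Hpt).
      rewrite sum_sub, sum_delta, sum_tele in Hs by lia.
      unfold G in Hs.
      assert (0 <= s (S Bm) * (INR (2*kh) - 2 * INR (S Bm) - (INR (S Bm) - INR z))) by lra.
      assert (0 <= INR (2*kh) - 2 * INR (S Bm) - (INR (S Bm) - INR z)).
      { destruct (Rle_or_lt 0 (INR (2*kh) - 2 * INR (S Bm) - (INR (S Bm) - INR z))); auto. nra. }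
      apply INR_le. rewrite plus_INR, !mult_INR. simpl (INR 3). simpl (INR 2). rewrite mult_INR in H0. simpl (INR 2) in H0. lra. }
    assert (A11 : (2 * S Bm < 2 * kh)%nat) by lia.
    assert (A12 : z = 0%nat \/ (z + 3 * S Bm <= 4 * kl + 1)%nat).
    { destruct z as [|a]; [left; reflexivity|right].
      assert (Hsa : s a < s (S Bm)).
      { destruct (Rle_or_lt (s (S Bm)) (s a)) as [Hle|]; auto. exfalso.
        apply (Hzmin a ltac:(lia)). intros b' Hb'. destruct (Nat.eq_dec b' a) as [->|]; auto.
        apply Qz; lia. }
      assert (Hadj : forall e, (a <= e)%nat -> (S e < S Bm)%nat ->
                U_h P (INR (2*kh)) s e < U_h P (INR (2*kh)) s (S e)).
      { intros e Hae HeB.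
        set (k := fun d => s d * wb_u_h (INR (2*kh)) d (S e) - s d * wb_u_h (INR (2*kh)) d e).
        assert (Hpt : forall d, (d <= P)%nat -> j d +
           (if Nat.eqb d (S e) then s (S Bm) * (INR (2*kh) - 2 * INR e - 1) else 0)
         - (if Nat.eqb d (S Bm) then s (S Bm) * (INR (2*kh) - 2 * INR (S Bm)) else 0) <= k d).
        { intros d Hd. unfold j, k. rewrite !uh_eq. pose proof (Hs0 d Hd).
          assert (INR (2*kh) >= 2 * INR (S Bm) + 2).
          { rewrite Hvh. assert (INR (S Bm) + 1 <= INR kh) by (rewrite <- S_INR; apply le_INR; lia). lra. }
          assert (INR (S e) <= INR Bm) by (apply le_INR; lia).
          rewrite S_INR in *.
          destruct (Nat.eqb_spec d (S e)) as [->|Hne1].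
          - destruct (Nat.eqb_spec (S e) (S Bm)); [lia|].
            rewrite Nat.ltb_irrefl. destruct (Nat.ltb_spec (S Bm) (S e)); [lia|].
            destruct (Nat.ltb_spec Bm (S e)); [lia|]. destruct (Nat.ltb_spec e (S e)); [|lia].
            pose proof (Qz (S e) ltac:(lia)). rewrite !S_INR in *. nra.
          - destruct (Nat.eqb_spec d (S Bm)) as [->|Hne2].
            + rewrite Nat.ltb_irrefl. destruct (Nat.ltb_spec Bm (S Bm)); [|lia].
              destruct (Nat.ltb_spec (S e) (S Bm)); [|lia]. destruct (Nat.ltb_spec e (S Bm)); [|lia].
              rewrite S_INR. lra.
            + destruct (Nat.ltb_spec (S Bm) d).
              * rewrite Hsz by lia. lra.
              * destruct (Nat.ltb_spec Bm d); [lia|].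
                destruct (Nat.ltb_spec (S e) d); destruct (Nat.ltb_spec e d); try lia.
                -- lra.
                -- rewrite S_INR. lra. }
        assert (Hs := sum_le _ _ P Hpt).
        rewrite sum_sub, sum_add, !sum_delta in Hs by lia.
        unfold k in Hs. rewrite sum_sub in Hs. unfold U_h.
        assert (INR e + 2 <= INR (S Bm)).
        { assert (INR (S (S e)) <= INR (S Bm)) by (apply le_INR; lia). rewrite !S_INR in *; lra. }
        nra. }
      assert (Hinc : forall e e', (a <= e)%nat -> (e < e')%nat -> (e' < S Bm)%nat ->
                U_h P (INR (2*kh)) s e < U_h P (INR (2*kh)) s e').
      { assert (H : forall m e, (a <= e)%nat -> (e + S m < S Bm)%nat ->
                U_h P (INR (2*kh)) s e < U_h P (INR (2*kh)) s (e + S m)).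
        { induction m; intros e Hae HeB.
          - replace (e + 1)%nat with (S e) by lia. apply Hadj; lia.
          - apply Rlt_trans with (U_h P (INR (2*kh)) s (e + S m)). apply IHm; lia.
            replace (e + S (S m))%nat with (S (e + S m)) by lia. apply Hadj; lia. }
        intros e e' H1 H2 H3. replace e' with (e + S (e' - e - 1))%nat by lia. apply H; lia. }
      pose proof (Lam a (S Bm) ltac:(lia) HBP Hsa Hinc). lia. }
    assert (HBT : INR (S Bm) < INR kl + T).
    { destruct A12 as [->|Hz].
      - assert (INR (3 * S Bm) <= INR (2 * kh)) by (apply le_INR; lia).
        rewrite !mult_INR in H. simpl (INR 3) in H. simpl (INR 2) in H. lra.
      - assert (INR (6 * S Bm) <= INR (2 * kh + 4 * kl + 1)) by (apply le_INR; lia).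
        rewrite !plus_INR, !mult_INR in H. simpl (INR 6) in H. simpl (INR 4) in H. simpl (INR 2) in H. simpl (INR 1) in H. lra. }
    repeat split.
    +
      intros Hge.
      assert (H3 : (kh <= 3 * kl)%nat).
      { apply INR_le. rewrite mult_INR. simpl (INR 3). rewrite Hvl, Hvh in Hge. lra. }
      assert (HB2 : (S Bm <= 2 * kl)%nat) by (destruct A12; lia).
      set (sh_ := fun b => if Nat.leb b (S Bm) then s b else 0).
      assert (Hsh0 : forall b, 0 <= sh_ b).
      { intros b. unfold sh_. destruct (Nat.leb_spec b (S Bm)). apply Hs0; lia. lra. }
      assert (Hpair : forall d, (kl <= d <= 2*kl)%nat -> sh_ d <= sh_ (2*kl - d)%nat).
      { intros d Hd. unfold sh_. destruct (Nat.leb_spec (2*kl - d) (S Bm)); [|lia].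
        destruct (Nat.leb_spec d (S Bm)). apply Pair; lia. apply Hs0; lia. }
      assert (HE1 : Ebid P s = sum_f_R0 (fun b => sh_ b * INR b) (2*kl)).
      { unfold Ebid. transitivity (sum_f_R0 (fun b => sh_ b * INR b) P).
        apply sum_ext; intros b Hb. unfold sh_. destruct (Nat.leb_spec b (S Bm)). auto. rewrite Hsz by lia. auto.
        rewrite (sum_trunc _ (S Bm) P) by (first [lia | (intros i Hi; unfold sh_; destruct (Nat.leb_spec i (S Bm)); [lia|lra])]).
        rewrite (sum_trunc _ (S Bm) (2*kl)) by (first [lia | (intros i Hi; unfold sh_; destruct (Nat.leb_spec i (S Bm)); [lia|lra])]).
        reflexivity. }
      assert (HS1 : sum_f_R0 sh_ (2*kl) = 1).
      { rewrite <- Hs1. transitivity (sum_f_R0 sh_ P).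
        rewrite (sum_trunc _ (S Bm) P) by (first [lia | (intros i Hi; unfold sh_; destruct (Nat.leb_spec i (S Bm)); [lia|lra])]).
        rewrite (sum_trunc _ (S Bm) (2*kl)) by (first [lia | (intros i Hi; unfold sh_; destruct (Nat.leb_spec i (S Bm)); [lia|lra])]).
        reflexivity.
        apply sum_ext; intros b Hb. unfold sh_. destruct (Nat.leb_spec b (S Bm)). auto. rewrite Hsz by lia. auto. }
      set (F := fun b => sh_ b * (INR b - INR kl)).
      assert (HF : sum_f_R0 F (2*kl) <= 0).
      { assert (sum_f_R0 F (2*kl) + sum_f_R0 (fun i => F (2*kl - i)%nat) (2*kl) <= 0).
        { rewrite <- sum_add. apply Rle_trans with (sum_f_R0 (fun _ => 0) (2*kl)).
          apply sum_le. intros b Hb. unfold F. rewrite minus_INR by lia. rewrite mult_INR. simpl (INR 2).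
          destruct (le_lt_dec kl b).
          - pose proof (Hpair b ltac:(lia)). assert (INR kl <= INR b) by (apply le_INR; lia). nra.
          - pose proof (Hpair (2*kl - b)%nat ltac:(lia)).
            replace (2*kl - (2*kl - b))%nat with b in H by lia.
            assert (INR b < INR kl) by (apply lt_INR; lia). nra.
          - clear. induction (2*kl)%nat; simpl; lra. }
        rewrite <- sum_refl in H. lra. }
      rewrite HE1. unfold F in HF.
      rewrite (sum_ext _ (fun b => sh_ b * INR b - INR kl * sh_ b)) in HF by (intros; ring).
      rewrite sum_sub, sum_scal, HS1 in HF. lra.
    + lra.
    + lra.
    + lra.
    + lra.
    + intros. lra.
Qed.

Theorem theorem1
  (vbar pbar vl vh : nat)
  (Hevl : Nat.Even vl) (Hevh : Nat.Even vh)
  (Hvh_le : (vh <= vbar)%nat) (Hlt : (vl < vh)%nat)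
  (Hpbar : (vbar <= 2 * pbar)%nat)
  (sl sh : nat -> R)
  (HNE : is_NE pbar (INR vl) (INR vh) sl sh)
  (sll shl : nat -> nat -> R)
  (Hmix : forall lam : nat, is_mixed pbar (sll lam) /\ is_mixed pbar (shl lam))
  (Hmon : forall lam : nat,
      weakly_payoff_monotone pbar (INR vl) (INR vh) (sll lam) (shl lam))
  (Hcv : forall b : nat, (b <= pbar)%nat ->
      Un_cv (fun lam => sll lam b) (sl b) /\ Un_cv (fun lam => shl lam b) (sh b)) :
  exists Lam : nat, forall lam : nat, (Lam <= lam)%nat ->
    (INR vl >= INR vh / 3 -> Ebid pbar (sll lam) < netval vl + 1) /\
    (netval vl - 1 < Ebid pbar (shl lam) /\
     Ebid pbar (shl lam) < netval vl + t_v vl vh) /\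
    (pi_l pbar (INR vl) (sll lam) (shl lam) < netval vl + t_v vl vh /\
     pi_h pbar (INR vh) (sll lam) (shl lam) > netval vh + (ES vl vh - t_v vl vh)) /\
    (pi_l pbar (INR vl) sl sh > netval vl ->
     Ebid pbar (sll lam) < Ebid pbar (shl lam)).
Proof.
  destruct Hevl as [kl ->]. destruct Hevh as [kh ->].
  set (P := pbar) in *.
  assert (Hk : (kl < kh)%nat) by lia.
  assert (HkP : (kh <= P)%nat) by lia.
  assert (Ht0 : forall n i, (i <= P)%nat -> 0 <= shl n i) by (intros n i Hi; destruct (Hmix n) as [_ [H _]]; auto).
  assert (Hs0 : forall n i, (i <= P)%nat -> 0 <= sll n i) by (intros n i Hi; destruct (Hmix n) as [[H _] _]; auto).
  assert (cs : forall b, (b <= P)%nat -> Un_cv (fun n => sll n b) (sl b)) by (intros; apply Hcv; auto).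
  assert (ct : forall b, (b <= P)%nat -> Un_cv (fun n => shl n b) (sh b)) by (intros; apply Hcv; auto).
  assert (cUl : forall b, Un_cv (fun n => U_l P (INR (2*kl)) (shl n) b) (U_l P (INR (2*kl)) sh b)).
  { intros b. unfold U_l. apply (cv_sum (fun n d => shl n d * wb_u_l (INR (2*kl)) b d)).
    intros d Hd. apply CV_mult. apply ct; auto. apply cv_const. }
  assert (cUh : forall b, Un_cv (fun n => U_h P (INR (2*kh)) (sll n) b) (U_h P (INR (2*kh)) sl b)).
  { intros b. unfold U_h. apply (cv_sum (fun n d => sll n d * wb_u_h (INR (2*kh)) d b)).
    intros d Hd. apply CV_mult. apply cs; auto. apply cv_const. }
  assert (cEs : Un_cv (fun n => Ebid P (sll n)) (Ebid P sl)).
  { unfold Ebid. apply (cv_sum (fun n d => sll n d * INR d)).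
    intros d Hd. apply CV_mult. apply cs; auto. apply cv_const. }
  assert (cEt : Un_cv (fun n => Ebid P (shl n)) (Ebid P sh)).
  { unfold Ebid. apply (cv_sum (fun n d => shl n d * INR d)).
    intros d Hd. apply CV_mult. apply ct; auto. apply cv_const. }
  assert (cpl : Un_cv (fun n => pi_l P (INR (2*kl)) (sll n) (shl n)) (pi_l P (INR (2*kl)) sl sh)).
  { unfold pi_l. apply (cv_sum (fun n b => sll n b * U_l P (INR (2*kl)) (shl n) b)).
    intros d Hd. apply CV_mult. apply cs; auto. apply cUl. }
  assert (cph : Un_cv (fun n => pi_h P (INR (2*kh)) (sll n) (shl n)) (pi_h P (INR (2*kh)) sl sh)).
  { unfold pi_h. apply (cv_sum (fun n b => shl n b * U_h P (INR (2*kh)) (sll n) b)).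
    intros d Hd. apply CV_mult. apply ct; auto. apply cUh. }
  assert (F1 : forall b, (kl <= b)%nat -> (b < P)%nat -> sl (S b) <= sl b).
  { intros b Hb HbP. apply (lim_le (fun n => sll n (S b)) (fun n => sll n b)); try apply cs; try lia.
    intros n. apply (mono_l P (INR (2*kl)) (INR (2*kh)) (sll n) (shl n)); auto; try lia.
    apply U_l_dom. auto. intros e He. rewrite !ul_eq.
    assert (INR (2*kl) <= 2 * INR b) by (rewrite mult_INR; simpl (INR 2); assert (INR kl <= INR b) by (apply le_INR; lia); lra).
    rewrite S_INR.
    destruct (Nat.ltb_spec e (S b)); destruct (Nat.ltb_spec e b); try lia; try lra.
    replace e with b by lia. lra. }
  assert (Pair : forall d, (kl <= d <= 2*kl)%nat -> (d <= P)%nat -> sl d <= sl (2*kl - d)%nat).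
  { intros d Hd HdP. apply (lim_le (fun n => sll n d) (fun n => sll n (2*kl - d)%nat)); try apply cs; try lia.
    intros n. apply (mono_l P (INR (2*kl)) (INR (2*kh)) (sll n) (shl n)); auto; try lia.
    apply U_l_dom. auto. intros e He. rewrite !ul_eq.
    assert (INR (2*kl - d) = INR (2*kl) - INR d) by (rewrite minus_INR; [reflexivity|lia]).
    destruct (Nat.ltb_spec e d); destruct (Nat.ltb_spec e (2*kl - d)); try lia.
    - assert (INR (2*kl - d) <= INR d) by (apply le_INR; lia). lra.
    - assert (INR (2*kl - d) <= INR e) by (apply le_INR; lia). lra.
    - lra. }
  assert (Lam : forall a B, (a < B)%nat -> (B <= P)%nat -> sl a < sl B ->
     (forall e e', (a <= e)%nat -> (e < e')%nat -> (e' < B)%nat ->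
        U_h P (INR (2*kh)) sl e < U_h P (INR (2*kh)) sl e') ->
     (a + 3*B <= 2*(2*kl))%nat).
  { intros a B HaB HBP Hsa Hinc.
    destruct (le_lt_dec (a + 3*B) (2*(2*kl))) as [|Hgt]; auto. exfalso.
    set (p := Nat.max a (Nat.min (2*kl - B) (B - 1))).
    assert (Hp1 : (a <= p)%nat) by lia. assert (Hp2 : (p < B)%nat) by lia.
    assert (Ev1 : ev (fun n => sll n a < sll n B)) by (apply (ev_lt _ _ _ _ (cs a ltac:(lia)) (cs B HBP)); auto).
    assert (Ev2 : ev (fun n => forall e, (e <= P)%nat ->
        ((a <= e)%nat -> (e < p)%nat -> shl n e <= shl n p) /\ ((p < e)%nat -> (e < B)%nat -> shl n p <= shl n e))).
    { apply ev_fin. intros e He. apply ev_and.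
      - destruct (le_lt_dec a e); [destruct (lt_dec e p)|].
        + apply (ev_mono (fun n => U_h P (INR (2*kh)) (sll n) e < U_h P (INR (2*kh)) (sll n) p)).
          * intros n Hn _ _. apply (mono_h P (INR (2*kl)) (INR (2*kh)) (sll n) (shl n)); auto; try lia. lra.
          * apply (ev_lt _ _ _ _ (cUh e) (cUh p)). apply Hinc; lia.
        + apply (ev_mono (fun _ => True)); [intros; lia|apply ev_true].
        + apply (ev_mono (fun _ => True)); [intros; lia|apply ev_true].
      - destruct (lt_dec p e); [destruct (lt_dec e B)|].
        + apply (ev_mono (fun n => U_h P (INR (2*kh)) (sll n) p < U_h P (INR (2*kh)) (sll n) e)).
          * intros n Hn _ _. apply (mono_h P (INR (2*kl)) (INR (2*kh)) (sll n) (shl n)); auto; try lia. lra.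
          * apply (ev_lt _ _ _ _ (cUh p) (cUh e)). apply Hinc; lia.
        + apply (ev_mono (fun _ => True)); [intros; lia|apply ev_true].
        + apply (ev_mono (fun _ => True)); [intros; lia|apply ev_true]. }
    destruct (ev_and _ _ Ev1 Ev2) as [N HN]. destruct (HN N (le_n _)) as [Hs Hord].
    set (t := shl N).
    assert (HUlt : U_l P (INR (2*kl)) t a < U_l P (INR (2*kl)) t B).
    { destruct (Hmon N) as [Hm _]. apply Hm; auto; lia. }
    set (G := fun d : nat => t p * (INR d * (INR d - 1) / 2 + INR d * (INR B - INR (2*kl)))).
    set (f := fun e => t e * wb_u_l (INR (2*kl)) a e - t e * wb_u_l (INR (2*kl)) B e).
    assert (Hpt : forall e, (e <= P)%nat ->
       (if andb (Nat.leb a e) (Nat.ltb e B) then G (S e) - G e else 0) <= f e).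
    { intros e He. unfold f, G. rewrite !ul_eq. pose proof (Ht0 N e He) as Hte. fold t in Hte.
      destruct (Nat.leb_spec a e); destruct (Nat.ltb_spec e B); cbn [andb].
      - destruct (Nat.ltb_spec e a); [lia|].
        rewrite S_INR.
        assert (Hw : t p * ((INR e + 1) * (INR e + 1 - 1) / 2 + (INR e + 1) * (INR B - INR (2*kl))) -
                     t p * (INR e * (INR e - 1) / 2 + INR e * (INR B - INR (2*kl)))
                     = t p * (INR e + INR B - INR (2*kl))) by field.
        rewrite Hw.
        destruct (Hord e He) as [Ho1 Ho2].
        destruct (lt_eq_lt_dec e p) as [[Hlt2|Heq]|Hgt2].
        + specialize (Ho1 ltac:(lia) Hlt2).
          assert (Hx : INR (e + B) < INR (2*kl)) by (apply lt_INR; lia). rewrite plus_INR in Hx. assert (Hm : 0 <= (t p - t e) * (INR (2*kl) - (INR e + INR B))) by (apply Rmult_le_pos; unfold t in *; lra). unfold t in *. nra.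
        + subst e. lra.
        + specialize (Ho2 Hgt2 ltac:(lia)).
          assert (Hx : INR (2*kl) < INR (e + B)) by (apply lt_INR; lia). rewrite plus_INR in Hx. assert (Hm : 0 <= (t e - t p) * ((INR e + INR B) - INR (2*kl))) by (apply Rmult_le_pos; unfold t in *; lra). unfold t in *. nra.
      - destruct (Nat.ltb_spec e a); [lia|]. lra.
      - destruct (Nat.ltb_spec e a); [|lia].
        assert (INR a < INR B) by (apply lt_INR; lia). nra.
      - lia. }
    assert (Hsum := sum_le _ _ P Hpt).
    rewrite sum_tele in Hsum by lia.
    unfold f in Hsum. rewrite sum_sub in Hsum.
    assert (HG : 0 <= G B - G a).
    { unfold G.
      assert (Hf : t p * (INR B * (INR B - 1) / 2 + INR B * (INR B - INR (2*kl))) -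
                   t p * (INR a * (INR a - 1) / 2 + INR a * (INR B - INR (2*kl)))
                   = t p * ((INR B - INR a) * ((INR a + 3 * INR B - 1 - 2 * INR (2*kl)) / 2))) by field.
      rewrite Hf. apply Rmult_le_pos. apply Ht0; lia.
      assert (INR a < INR B) by (apply lt_INR; lia).
      assert (INR (2 * (2 * kl)) + 1 <= INR (a + 3 * B)) by (rewrite <- S_INR; apply le_INR; lia).
      rewrite plus_INR, !mult_INR in H0. rewrite mult_INR. simpl (INR 2) in *. simpl (INR 3) in *.
      apply Rmult_le_pos; lra. }
    unfold U_l in HUlt. lra. }

  destruct (limit_main P kl kh sl sh Hk HkP HNE F1 Pair Lam) as [L1 [L2a [L2b [L3a [L3b L4]]]]].
  unfold t_v, ES. rewrite !netval_2.
  set (T := Rmax (2 * INR kh / 3 - INR kl) ((INR kh - INR kl) / 3) + 1) in *.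
  assert (E1 : ev (fun n => INR (2*kl) >= INR (2*kh) / 3 -> Ebid P (sll n) < INR kl + 1)).
  { destruct (Rlt_or_le (INR (2*kl)) (INR (2*kh) / 3)) as [Hl|Hl].
    - apply (ev_mono (fun _ => True)); [intros; lra|apply ev_true].
    - apply (ev_mono (fun n => Ebid P (sll n) < INR kl + 1)); [auto|].
      apply (ev_lt _ _ _ _ cEs (cv_const _)). specialize (L1 ltac:(lra)). lra. }
  assert (E2a : ev (fun n => INR kl - 1 < Ebid P (shl n))) by (apply (ev_lt _ _ _ _ (cv_const _) cEt); lra).
  assert (E2b : ev (fun n => Ebid P (shl n) < INR kl + T)) by (apply (ev_lt _ _ _ _ cEt (cv_const _)); lra).
  assert (E3a : ev (fun n => pi_l P (INR (2*kl)) (sll n) (shl n) < INR kl + T)) by (apply (ev_lt _ _ _ _ cpl (cv_const _)); lra).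
  assert (E3b : ev (fun n => INR kh + (INR kh - INR kl - T) < pi_h P (INR (2*kh)) (sll n) (shl n))) by (apply (ev_lt _ _ _ _ (cv_const _) cph); lra).
  assert (E4 : ev (fun n => pi_l P (INR (2*kl)) sl sh > INR kl -> Ebid P (sll n) < Ebid P (shl n))).
  { destruct (Rlt_or_le (INR kl) (pi_l P (INR (2*kl)) sl sh)) as [Hl|Hl].
    - apply (ev_mono (fun n => Ebid P (sll n) < Ebid P (shl n))); [auto|].
      apply (ev_lt _ _ _ _ cEs cEt). auto.
    - apply (ev_mono (fun _ => True)); [intros; lra|apply ev_true]. }
  destruct (ev_and _ _ E1 (ev_and _ _ E2a (ev_and _ _ E2b (ev_and _ _ E3a (ev_and _ _ E3b E4))))) as [N HN].
  exists N. intros n Hn. destruct (HN n Hn) as [H1 [H2 [H3 [H4 [H5 H6]]]]].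
  repeat split; auto.
Qed.
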